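(* Let $\mathcal{F}_1,\dots,\mathcal{F}_k$ be finite nonempty families of convex sets in $\mathbb{R}^d$ with $n_i=|\mathcal{F}_i|$, let $b\in\mathbb{R}^d$, let $\alpha\in(0,1]$ and $\beta=1-(1-\alpha)^{1/k}$. Assume that for at least an $\alpha$ fraction of the $\prod_{i=1}^k n_i$ transversals $\mathcal{T}$ of $\mathcal{F}_1,\dots,\mathcal{F}_k$, the set $K(\mathcal{T})$ has a point in $B(b,1)$. Then there exist $q\in\mathbb{R}^d$ and $i\in[k]$ such that at least $\beta n_i$ elements of $\mathcal{F}_i$ intersect the ball $B(q,1/\sqrt k)$.
   Context: A transversal of $\mathcal{F}_1,\dots,\mathcal{F}_k$ is $\mathcal{T}=(K_1,\dots,K_k)$ with $K_i\in\mathcal{F}_i$ for all $i$, and $K(\mathcal{T})=\bigcap_{i=1}^kK_i$. $B(p,\rho)$ is the closed Euclidean ball of centre $p$ and radius $\rho$. *)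

(* Defs.v *)
From HB Require Import structures.
From mathcomp Require Import all_boot all_order all_algebra.
From mathcomp Require Import all_classical all_reals exp.
Set Implicit Arguments. Unset Strict Implicit. Unset Printing Implicit Defensive.
Import Order.TTheory GRing.Theory Num.Theory.
Local Open Scope ring_scope.
Local Open Scope classical_set_scope.

Definition eucl_norm (R : realType) (d : nat) (v : 'rV[R]_d) : R :=
  Num.sqrt (\sum_(i < d) v ord0 i ^+ 2).

Definition eball (R : realType) (d : nat) (p : 'rV[R]_d) (rho : R) : set 'rV[R]_d :=
  [set x | eucl_norm (x - p) <= rho].

Definition convex_set (R : realType) (d : nat) (A : set 'rV[R]_d) : Prop :=
  forall x y, A x -> A y -> forall t : R, 0 <= t -> t <= 1 ->
    A (t *: x + (1 - t) *: y).

(* A transversal of families F_1..F_k (F_i indexed by 'I_(n i)) is a choice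
   function picking an index in each family. *)
Definition transv (k : nat) (n : 'I_k -> nat) := {dffun forall i : 'I_k, 'I_(n i)}.

Definition KT (R : realType) (d k : nat) (n : 'I_k -> nat)
  (F : forall i : 'I_k, 'I_(n i) -> set 'rV[R]_d) (t : transv n) : set 'rV[R]_d :=
  [set x | forall i, F i (t i) x].

(* Main.v *)
Require Import Defs.
From HB Require Import structures.
From mathcomp Require Import all_boot all_order all_algebra.
From mathcomp Require Import all_classical all_reals exp all_analysis.
From mathcomp Require Import ring lra zify.
Require Import Defs.
Import Order.TTheory GRing.Theory Num.Theory.
Import numFieldTopology.Exports numFieldNormedType.Exports.
Local Open Scope ring_scope.
Local Open Scope classical_set_scope.

Set Implicit Arguments. Unset Strict Implicit. Unset Printing Implicit Defensive.

Definition sqn (R : realType) (d : nat) (v : 'rV[R]_d) : R := \sum_(i < d) v ord0 i ^+ 2.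
Definition dotv (R : realType) (d : nat) (u v : 'rV[R]_d) : R := \sum_(i < d) u ord0 i * v ord0 i.

Lemma sqnD (R : realType) (d : nat) (u v : 'rV[R]_d) : sqn (u + v) = sqn u + sqn v + 2 * dotv u v.
Proof.
rewrite /sqn /dotv mulr_sumr -!big_split /=; apply: eq_bigr => i _.
rewrite !mxE; ring.
Qed.

Lemma sqnZ (R : realType) (d : nat) (a : R) (v : 'rV[R]_d) : sqn (a *: v) = a ^+ 2 * sqn v.
Proof.
rewrite /sqn mulr_sumr; apply: eq_bigr => i _; rewrite !mxE; ring.
Qed.

Lemma sqn_ge0 (R : realType) (d : nat) (v : 'rV[R]_d) : 0 <= sqn v.
Proof. by apply: sumr_ge0 => i _; exact: sqr_ge0. Qed.

Lemma convex_comb (R : realType) (d : nat) (K : set 'rV[R]_d) m (l : 'I_m -> R) (x : 'I_m -> 'rV[R]_d) :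
  convex_set K -> (forall j, 0 <= l j) -> \sum_j l j = 1 ->
  (forall j, K (x j)) -> K (\sum_j l j *: x j).
Proof.
move=> cK; elim: m l x => [|m IH] l x l0 l1 Kx.
  by move: l1; rewrite big_ord0 => /eqP; rewrite eq_sym oner_eq0.
rewrite big_ord_recl; rewrite big_ord_recl in l1.
have rest0 : 0 <= \sum_(i < m) l (lift ord0 i) by apply: sumr_ge0.
have [e1|ne1] := eqVneq (l ord0) 1.
  have z : forall i, l (lift ord0 i) = 0.
    move=> i; apply/eqP; rewrite eq_le l0 andbT.
    have : \sum_(i < m) l (lift ord0 i) = 0 by move: l1; rewrite e1; lra.
    move=> /eqP; rewrite psumr_eq0 => [/allP/(_ i)|]; last by move=> *; exact: l0.
    by rewrite mem_index_enum => /(_ isT) /eqP ->.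
  rewrite big1 ?addr0 ?e1 ?scale1r //; by move=> i _; rewrite z scale0r.
set s := \sum_(i < m) l (lift ord0 i).
have s0 : 0 < s.
  rewrite lt_neqAle rest0 andbT; apply/eqP => s0; move: l1.
  by rewrite -/s -s0 addr0; apply/eqP.
have -> : \sum_(i < m) l (lift ord0 i) *: x (lift ord0 i) =
   (1 - l ord0) *: \sum_(i < m) (l (lift ord0 i) / s) *: x (lift ord0 i).
  rewrite scaler_sumr; apply: eq_bigr => i _; rewrite scalerA.
  have -> : 1 - l ord0 = s by move: l1; rewrite -/s; lra.
  by rewrite mulrC divfK // gt_eqF.
have Ky : K (\sum_(i < m) (l (lift ord0 i) / s) *: x (lift ord0 i)).
  apply: IH => //; first by move=> j; apply: divr_ge0 => //; exact: ltW.
  by rewrite -mulr_suml divff // gt_eqF.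
have l01 : l ord0 <= 1 by move: l1; rewrite -/s; lra.
exact: (cK _ _ (Kx ord0) Ky (l ord0) (l0 ord0) l01).
Qed.

Lemma cont_sum (R : realType) (T : topologicalType) (I : Type) (s : seq I) (g : I -> T -> R) :
  (forall i, continuous (g i)) -> continuous (fun x => \sum_(i <- s) g i x).
Proof.
move=> cg; elim: s => [|i s IH].
  by under eq_fun do rewrite big_nil; exact: cst_continuous.
under eq_fun do rewrite big_cons.
by move=> x; apply: cvgD; [exact: cg | exact: IH].
Qed.


Lemma dotvC (R : realType) (d : nat) (u v : 'rV[R]_d) : dotv u v = dotv v u.
Proof. by rewrite /dotv; apply: eq_bigr => i _; rewrite mulrC. Qed.

Lemma geo (R : realType) (d : nat) m (x : 'I_m -> 'rV[R]_d) (K : set 'rV[R]_d) (c : 'rV[R]_d) (R2 r2 : R) :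
  (0 < m)%N -> convex_set K -> (forall j, K (x j)) ->
  (forall j, sqn (x j - c) <= R2) -> (forall y, K y -> r2 < sqn (y - c)) ->
  exists c', forall j, sqn (x j - c') <= R2 - r2.
Proof.
move=> m0 cK Kx xR Kr.
pose D : set 'rV[R]_m := [set l | forall i, `[0, 1] (l ord0 i)] `&`
   [set l | \sum_i l ord0 i = 1].
pose comb (l : 'rV[R]_m) := \sum_j l ord0 j *: x j.
pose f := fun l : 'rV[R]_m => \sum_(t < d)
   (((\sum_j l ord0 j * x j ord0 t) - c ord0 t) * ((\sum_j l ord0 j * x j ord0 t) - c ord0 t)).
have fE l : f l = sqn (comb l - c).
  rewrite /f /sqn; apply: eq_bigr => t _; rewrite expr2.
  have e : (comb l - c) ord0 t = \sum_j l ord0 j * x j ord0 t - c ord0 t.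
    rewrite !mxE summxE; congr (_ - _); apply: eq_bigr => j _; by rewrite mxE.
  by rewrite e.
have cD : compact D.
  apply: compact_closedI.
    by apply: (@rV_compact _ _ (fun=> `[(0:R), 1]%classic)) => i; exact: segment_compact.
  have cs : continuous (fun l : 'rV[R]_m => \sum_i l ord0 i).
    by apply: cont_sum => i; exact: coord_continuous.
  have := (continuous_closedP _).1 cs _ (@closed_eq R 1).
  exact.
have D0 : D !=set0.
  exists (\row_i (i == Ordinal m0)%:R); split.
    move=> i; rewrite mxE /= in_itv /=; by case: (i == _); rewrite /= ?lexx ?ler01.
  rewrite /=; under eq_bigr do rewrite mxE.
  rewrite (bigD1 (Ordinal m0)) //= big1 ?eqxx ?addr0 // => i /negbTE.
  by move=> ->.
have cf : continuous f.
  have pc j t : continuous (fun l : 'rV[R]_m => l ord0 j * x j ord0 t).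
    move=> l; apply: continuousM; [exact: (@coord_continuous R 1 m ord0 j) | exact: cst_continuous].
  have hc t : continuous (fun l : 'rV[R]_m => \sum_j l ord0 j * x j ord0 t - c ord0 t).
    have sc : continuous (fun l : 'rV[R]_m => \sum_j l ord0 j * x j ord0 t).
      by apply: cont_sum => j; exact: pc j t.
    move=> l; apply: continuousB; [exact: sc | exact: cst_continuous].
  apply: cont_sum => t l; exact: (continuousM (hc t l) (hc t l)).
have [ls lsD lsmin] := compact_EVT_min D0 cD (continuous_subspaceT cf).
move: lsD; rewrite inE => -[ls01 ls1].
set z := comb ls.
have Kz : K z.
  apply: convex_comb => // j.
  by have := ls01 j; rewrite /= in_itv /= => /andP[].
exists z => j.
set a := dotv (z - c) (x j - z); set L := sqn (x j - z).
have L0 : 0 <= L by exact: sqn_ge0.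
have a0 : 0 <= a.
  rewrite leNgt; apply/negP => a0.
  set t := - a / (L - a).
  have La : 0 < L - a by lra.
  have tLa : t * (L - a) = - a by rewrite /t divfK // gt_eqF.
  have t0 : 0 < t by rewrite /t divr_gt0 // oppr_gt0.
  have t1 : t <= 1 by rewrite /t ler_pdivrMr // mul1r; lra.
  pose l' := \row_i ((1 - t) * ls ord0 i + t * (i == j)%:R).
  have l'D : l' \in D.
    rewrite inE; split.
      move=> i; rewrite mxE /= in_itv /=.
      have := ls01 i; rewrite /= in_itv /= => /andP[h1 h2].
      by case: (i == j); rewrite /= ?mulr1 ?mulr0 ?addr0; apply/andP; split; nra.
    rewrite /=.
    under eq_bigr do rewrite mxE.
    rewrite big_split /= -mulr_sumr ls1 -mulr_sumr (bigD1 j) //= eqxx big1 ?addr0.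
      by rewrite !mulr1; ring.
    by move=> i /negbTE ->.
  have := lsmin _ l'D; rewrite !fE.
  have -> : comb l' = (1 - t) *: z + t *: x j.
    rewrite /comb /z /comb.
    have e : forall i, l' ord0 i *: x i =
        (1 - t) *: (ls ord0 i *: x i) + (t * (i == j)%:R) *: x i.
      by move=> i; rewrite mxE scalerDl scalerA.
    under eq_bigr do rewrite e.
    rewrite big_split /= -scaler_sumr; congr (_ + _).
    rewrite (bigD1 j) //= eqxx mulr1 big1 ?addr0 // => i /negbTE ->.
    by rewrite mulr0 scale0r.
  have -> : (1 - t) *: z + t *: x j - c = (z - c) + t *: (x j - z).
    by apply/matrixP => i0 i; rewrite !mxE; ring.
  rewrite [sqn (_ + t *: _)]sqnD sqnZ -/L.
  have -> : dotv (z - c) (t *: (x j - z)) = t * a.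
    by rewrite /a /dotv mulr_sumr; apply: eq_bigr => i _; rewrite !mxE; ring.
  nra.
have := xR j.
have -> : x j - c = (x j - z) + (z - c) by rewrite addrA subrK.
rewrite sqnD dotvC -/a -/L.
have := Kr _ Kz; lra.
Qed.


Lemma card_agree k (n : 'I_k -> nat) (p : transv n) (m : nat) :
  #|[pred T : transv n | [forall j : 'I_k, (j < m)%N ==> (T j == p j)]]| =
  \prod_(j < k | (m <= j)%N) n j.
Proof.
pose G := fun j : 'I_k => (if (j < m)%N then pred1 (p j) else predT) : pred 'I_(n j).
rewrite (@eq_card _ _ [pred T : transv n | T \in family G]); last first.
  move=> T; rewrite !inE; apply/forallP/familyP => h j; move: (h j); rewrite /G;
  by case: ifP.
rewrite card_family foldrE big_map big_enum /= [RHS]big_mkcond /=.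

apply: eq_bigr => j _; rewrite /G; case: ltnP => _ /=.
  exact: card1.
exact: card_ord.
Qed.

Unset Implicit Arguments. Set Strict Implicit.

Lemma sqn_eucl (R : realType) (d : nat) (v : 'rV[R]_d) (r : R) : 0 <= r ->
  (eucl_norm v <= r) <-> (sqn v <= r ^+ 2).
Proof.
move=> r0; have e : eucl_norm v ^+ 2 = sqn v by rewrite /eucl_norm sqr_sqrtr // sqn_ge0.
have e0 : 0 <= eucl_norm v by exact: sqrtr_ge0.
split => h.
  by rewrite -e; nra.
by rewrite -e in h; nra.
Qed.

Theorem theorem4p3 (R : realType) (d k : nat) (n : 'I_k -> nat)
  (F : forall i : 'I_k, 'I_(n i) -> set 'rV[R]_d)
  (b : 'rV[R]_d) (alpha : R) :
  (0 < k)%N ->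
  (forall i, (0 < n i)%N) ->
  (forall i, injective (F i)) ->
  (forall i j, convex_set (F i j)) ->
  0 < alpha -> alpha <= 1 ->
  alpha * (\prod_(i < k) n i)%:R <=
    #|[pred t : transv n | `[< KT F t `&` eball b 1 !=set0 >]]|%:R ->
  exists (q : 'rV[R]_d) (i : 'I_k),
    (1 - (1 - alpha) `^ (k%:R^-1)) * (n i)%:R <=
      #|[pred j : 'I_(n i) | `[< F i j `&` eball q (Num.sqrt k%:R)^-1 !=set0 >]]|%:R.
Proof.
move=> k0 n0 _ cF a0 a1 hyp.
have kR0 : (0 : R) < k%:R by rewrite ltr0n.
pose gam := (1 - alpha) `^ (k%:R^-1).
have gam0 : 0 <= gam by apply: powR_ge0.
have gam1 : gam < 1.
  have [a1e|a1l] := eqVneq alpha 1.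
    by rewrite /gam a1e subrr powR0 ?ltr01 // invr_eq0 pnatr_eq0 -lt0n.
  have h1 : 0 < 1 - alpha by rewrite subr_gt0 lt_neqAle a1l a1.
  have ki0 : (0:R) < k%:R^-1 by rewrite invr_gt0.
  have := @gt0_ltr_powR R (k%:R^-1) ki0 (1 - alpha) 1.
  rewrite powR1 /=; apply.
  - by rewrite nnegrE; exact: ltW.
  - by rewrite nnegrE ler01.
  - lra.
have gamk : gam ^+ k = 1 - alpha.
  have h0 : 0 <= 1 - alpha by lra.
  rewrite -powR_mulrn // /gam -powRrM mulVf ?pnatr_eq0 -?lt0n // powRr1 //.
rewrite -/gam.
pose S (c : 'rV[R]_d) (i : 'I_k) :=
  [pred j : 'I_(n i) | `[< F i j `&` eball c (Num.sqrt k%:R)^-1 !=set0 >]].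
have [hex0|Hno] := pselect (exists q (i : 'I_k), (1 - gam) * (n i)%:R <= #|S q i|%:R).
  by case: hex0 => q [i h]; exists q, i.
exfalso.
have H : forall c i, (#|S c i|%:R < (1 - gam) * (n i)%:R).
  move=> c i; rewrite ltNge; apply/negP => h; apply: Hno; by exists c, i.
have sk : (Num.sqrt k%:R)^-1 ^+ 2 = k%:R^-1 :> R.
  by rewrite exprVn sqr_sqrtr // ler0n.
have sk0 : (0:R) <= (Num.sqrt k%:R)^-1 by rewrite invr_ge0 sqrtr_ge0.
have hex : forall T : transv n, exists x,
    KT F T `&` eball b 1 !=set0 -> (KT F T `&` eball b 1) x.
  move=> T; case: (pselect (KT F T `&` eball b 1 !=set0)) => [[x hx]|hn].
    by exists x.
  by exists b.
have [w hw] := choice hex.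
pose goodb (T : transv n) := `[< KT F T `&` eball b 1 !=set0 >].
pose agree (p : transv n) (m : nat) (T : transv n) :=
  [forall j : 'I_k, (j < m)%N ==> (T j == p j)].
pose A (m : nat) (p : transv n) (c : 'rV[R]_d) := [pred T : transv n |
  [&& agree p m T, goodb T & sqn (w T - c) <= 1 - m%:R / k%:R]].
pose Pm (m : nat) := (\prod_(j < k | (m <= j)%N) n j)%N.
pose als (m : nat) := 1 - gam ^+ (k - m).
have inA : forall m p c T, reflect
    [/\ agree p m T, goodb T & sqn (w T - c) <= 1 - m%:R / k%:R] (T \in A m p c).
  move=> m p c T; exact: and3P.
have wgood : forall T, goodb T -> (KT F T `&` eball b 1) (w T).
  by move=> T /asboolP /hw.
have Inv : forall m, (m < k)%N -> exists p c, als m * (Pm m)%:R <= #|A m p c|%:R.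
  elim=> [_|m IH mk].
    pose p0 : transv n := finfun (fun i : 'I_k => Ordinal (n0 i)).
    exists p0, b.
    have -> : als 0%N = alpha by rewrite /als subn0 gamk; ring.
    have -> : Pm 0%N = (\prod_(i < k) n i)%N by [].
    apply: (le_trans hyp); rewrite ler_nat; apply: subset_leq_card.
    apply/fintype.subsetP => T hg; apply/inA; split => //.
      by apply/forallP => j.
    have [_ hb] := wgood T hg.
    have := (@sqn_eucl R d (w T - b) 1 ler01).1 hb.
    by rewrite expr1n mul0r subr0.
  have mk' : (m < k)%N by apply: ltnW.
  have [p [c hA]] := IH mk'.
  pose i := Ordinal mk'.
  pose fib (K : 'I_(n i)) := [pred T : transv n | (T \in A m p c) && (T i == K)].
  pose P' := Pm m.+1.
  have PmS : Pm m = (n i * P')%N.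
    rewrite /Pm /P' (bigD1 i) //=; congr (_ * _)%N; apply: eq_bigl => j.
    by rewrite -val_eqE /= ltn_neqAle eq_sym andbC.
  have cardA : #|A m p c| = (\sum_K #|fib K|)%N.
    rewrite -sum1_card (partition_big (fun T : transv n => T i) predT) //=.
    by apply: eq_bigr => K _; rewrite -sum1_card.
  have fib_agree : forall K T0 T, T0 \in fib K -> T \in fib K -> agree T0 m.+1 T.
    move=> K T0 T; rewrite !inE => /andP[/inA[ag0 _ _] /eqP e0] /andP[/inA[ag _ _] /eqP e].
    apply/forallP => j; apply/implyP => jm.
    have [jlt|jge] := ltnP j m.
      move/forallP: ag0 => /(_ j) /implyP /(_ jlt) /eqP ->.
      by move/forallP: ag => /(_ j) /implyP /(_ jlt).
    have -> : j = i by apply/val_inj => /=; apply/eqP; rewrite eqn_leq jge -ltnS jm.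
    by rewrite e e0.
  have fibP : forall K, (#|fib K| <= P')%N.
    move=> K; case: (posnP #|fib K|) => [->//|/card_gt0P[T0 hT0]].
    rewrite /P' /Pm -(card_agree T0 m.+1); apply: subset_leq_card.
    by apply/fintype.subsetP => T hT; rewrite inE; exact: fib_agree hT0 hT.
  have HS := H c i.
  have sn : (#|S c i| < n i)%N.
    rewrite -(ltr_nat R); apply: (lt_le_trans HS).
    have : (0:R) <= (n i)%:R by rewrite ler0n.
    nra.
  have [K1 K1S] : exists K1, K1 \notin S c i.
    case: (pselect (exists K1, K1 \notin S c i)) => // hno; exfalso.
    have : (n i <= #|S c i|)%N.
      rewrite -{1}(card_ord (n i)); apply: subset_leq_card.
      apply/fintype.subsetP => K _; apply/negPn/negP => hK; apply: hno; by exists K.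
    by rewrite leqNgt sn.
  pose K0 := [arg max_(K > K1 | K \notin S c i) #|fib K|].
  have [K0nS K0max] : K0 \notin S c i /\ forall K, K \notin S c i -> (#|fib K| <= #|fib K0|)%N.
    by rewrite /K0; case: arg_maxnP => // K hK hmax; split.
  pose f0 := #|fib K0|.
  have bound : (#|A m p c| <= #|S c i| * P' + (n i - #|S c i|) * f0)%N.
    rewrite cardA (bigID (fun K => K \in S c i)) /=; apply: leq_add.
      apply: (@leq_trans (\sum_(K | K \in S c i) P')); first by apply: leq_sum => K _; exact: fibP.
      by rewrite sum_nat_const.
    apply: (@leq_trans (\sum_(K | K \notin S c i) f0)); first by apply: leq_sum => K; exact: K0max.
    rewrite sum_nat_const; apply: leq_mul => //.
    have := cardC (S c i); rewrite card_ord => e.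
    have ce : #|[predC S c i]| = (n i - #|S c i|)%N.
      by apply/eqP; rewrite -(eqn_add2l #|S c i|) e (subnKC (ltnW sn)).
    rewrite -ce; apply: eq_leq; apply: eq_card => K; by rewrite !inE.
  have k1 : (k - m = (k - m.+1).+1)%N by lia.
  pose g := gam ^+ (k - m.+1).
  have g0 : 0 <= g by apply: exprn_ge0.
  have g1 : g < 1 by rewrite /g exprn_ilt1 // subn_eq0 -ltnNge.
  have alsm : als m = 1 - gam * g by rewrite /als k1 exprS.
  have alsm1 : als m.+1 = 1 - g by [].
  have P'0 : (0 < P')%N by apply: prodn_gt0.
  have hA' : (1 - gam * g) * ((n i)%:R * P'%:R) <= (#|A m p c|%:R : R).
    by rewrite -alsm -natrM -PmS.
  have boundR : (#|A m p c|%:R : R) <=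
      #|S c i|%:R * P'%:R + ((n i)%:R - #|S c i|%:R) * f0%:R.
    by rewrite -natrB ?(ltnW sn) // -!natrM -natrD ler_nat.
  have key : (1 - g) * P'%:R <= (f0%:R : R).
    move: HS hA' boundR.
    set s := (#|S c i|%:R : R); set nn := ((n i)%:R : R); set P := (P'%:R : R);
    set f := (f0%:R : R) => HS hA' boundR.
    have P0 : 0 <= P by rewrite /P ler0n.
    have nn0 : 0 <= nn by rewrite /nn ler0n.
    have h1 : 0 <= P * g * ((1 - gam) * nn - s).
      by apply: mulr_ge0; [apply: mulr_ge0|lra].
    have h2 : 0 <= (nn - s) * (f - (1 - g) * P) by nra.
    have ns : 0 < nn - s by nra.
    by rewrite -subr_ge0; rewrite (pmulr_rge0 _ ns) in h2.
  have f0pos : (0 < f0)%N.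
    rewrite -(ltr_nat R); apply: lt_le_trans key; apply: mulr_gt0.
      lra.
    by rewrite ltr0n.
  have /card_gt0P[T0 hT0] := f0pos.
  have gx : forall j : 'I_#|fib K0|, F i K0 (w (enum_val j)).
    move=> j; have := enum_valP j; rewrite inE => /andP[/inA[_ hg _] /eqP e].
    have [hK _] := wgood _ hg.
    by move: (hK i); rewrite e.
  have gs : forall j : 'I_#|fib K0|, sqn (w (enum_val j) - c) <= 1 - m%:R / k%:R.
    move=> j; have := enum_valP j; rewrite inE => /andP[/inA[_ _ hs] _]; exact: hs.
  have gr : forall y, F i K0 y -> k%:R^-1 < sqn (y - c).
    move=> y Fy; rewrite ltNge; apply/negP => hy; move: K0nS; rewrite inE => /negP; apply.
    apply/asboolP; exists y; split => //.
    by apply/(@sqn_eucl R d (y - c) _ sk0).2; rewrite sk.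
  have [c' hc'] := @geo R d #|fib K0| (fun j => w (enum_val j)) (F i K0) c
     (1 - m%:R / k%:R) (k%:R^-1) f0pos (cF i K0) gx gs gr.
  exists T0, c'.
  rewrite alsm1 (le_trans key) // ler_nat; apply: subset_leq_card.
  apply/fintype.subsetP => T hT.
  apply/inA; split.
  - exact: fib_agree hT0 hT.
  - by move: hT; rewrite inE => /andP[/inA[_ hg _] _].
  - have := hc' (enum_rank_in hT0 T); rewrite /= enum_rankK_in //.
    rewrite -natr1 mulrDl mul1r; lra.
have kp : (k.-1 < k)%N by rewrite ltn_predL.
have [p [c hA]] := Inv _ kp.
pose i := Ordinal kp.
have alsE : als k.-1 = 1 - gam.
  by rewrite /als (_ : (k - k.-1 = 1)%N) ?expr1 //; lia.
have PmE : Pm k.-1 = n i.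
  rewrite /Pm (big_pred1 i) // => j; rewrite /= -val_eqE /=.
  apply/idP/eqP => [h|->//]; apply/eqP; rewrite eqn_leq h andbT -ltnS prednK //.
have ekm : (k.-1%:R : R) = k%:R - 1 by rewrite -[in RHS](prednK k0) -natr1 addrK.
have sub : (#|A k.-1 p c| <= #|S c i|)%N.
  rewrite -(card_in_imset (f := fun T : transv n => T i)); last first.
    move=> T1 T2 /inA[ag1 _ _] /inA[ag2 _ _] e; apply/ffunP => j.
    have [jlt|jge] := ltnP j k.-1.
      move/forallP: ag1 => /(_ j) /implyP /(_ jlt) /eqP ->.
      by move/forallP: ag2 => /(_ j) /implyP /(_ jlt) /eqP ->.
    have -> : j = i.
      apply/val_inj => /=; apply/eqP; rewrite eqn_leq jge andbT -ltnS prednK //.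
    exact: e.
  apply: subset_leq_card; apply/fintype.subsetP => K /imsetP[T hT ->].
  move/inA: hT => [_ hg hs]; have [hK _] := wgood _ hg.
  rewrite inE; exists (w T); split; first exact: hK i.
  apply/(@sqn_eucl R d _ _ sk0).2; rewrite sk.
  move: hs; rewrite ekm mulrBl divff ?pnatr_eq0 -?lt0n //; lra.
have := H c i.
have : (#|A k.-1 p c|%:R : R) <= #|S c i|%:R by rewrite ler_nat.
rewrite alsE PmE in hA.
lra.
Qed.
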